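(* Let $p,l$ be distinct odd primes and let $\Gamma=\psi(\tilde\Gamma)$ be the group described in the context. Then $\Gamma$ is a CSA-group: every maximal abelian subgroup $\Gamma_0$ of $\Gamma$ is malnormal, i.e. $g\Gamma_0g^{-1}\cap\Gamma_0=\{1\}$ for all $g\in\Gamma\setminus\Gamma_0$.
   Context: Let $p,l$ be distinct odd primes. Let $\mathbb H(\mathbb Z)$ be the ring of quaternions $x=x_0+x_1i+x_2j+x_3k$ with $x_0,\dots,x_3\in\mathbb Z$, where $i^2=j^2=k^2=-1$, $ij=-ji=k$; write $|x|^2=x_0^2+x_1^2+x_2^2+x_3^2$. Fix $c_p,d_p\in\mathbb Q_p$ with $c_p^2+d_p^2+1=0$ and $c_l,d_l\in\mathbb Q_l$ with $c_l^2+d_l^2+1=0$. Define $\psi:\mathbb H(\mathbb Z)\setminus\{0\}\to G:=PGL_2(\mathbb Q_p)\times PGL_2(\mathbb Q_l)$ by sending $x$ to the class of the pair $\left(\begin{pmatrix} x_0+x_1c_p+x_3d_p & -x_1d_p+x_2+x_3c_p\\ -x_1d_p-x_2+x_3c_p & x_0-x_1c_p-x_3d_p\end{pmatrix},\begin{pmatrix} x_0+x_1c_l+x_3d_l & -x_1d_l+x_2+x_3c_l\\ -x_1d_l-x_2+x_3c_l & x_0-x_1c_l-x_3d_l\end{pmatrix}\right)$. Let $\tilde\Gamma$ be the set of $x\in\mathbb H(\mathbb Z)$ such that $|x|^2=p^rl^s$ for some integers $r,s\ge 0$, and such that $x_0$ is odd and $x_1,x_2,x_3$ are even if $|x|^2\equiv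 1\pmod 4$, while $x_1$ is even and $x_0,x_2,x_3$ are odd if $|x|^2\equiv 3\pmod 4$. Then $\Gamma=\psi(\tilde\Gamma)$ is a torsion-free cocompact lattice in $G$. *)

(* Defs.v *)
From mathcomp Require Import all_boot all_order all_algebra.
Set Implicit Arguments. Unset Strict Implicit. Unset Printing Implicit Defensive.
Import Order.TTheory GRing.Theory Num.Theory.
Local Open Scope ring_scope.

(** Integer quaternions x = x0 + x1 i + x2 j + x3 k. *)
Record quat := Quat { q0 : int; q1 : int; q2 : int; q3 : int }.

Definition qnorm2 (x : quat) : int :=
  q0 x ^+ 2 + q1 x ^+ 2 + q2 x ^+ 2 + q3 x ^+ 2.

Definition in_GammaTilde (p l : nat) (x : quat) : Prop :=
  (exists r s : nat, qnorm2 x = (p ^ r * l ^ s)%N%:Z) /\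
  ((qnorm2 x %% 4)%Z = 1 ->
     ~~ (2 %| q0 x)%Z /\ (2 %| q1 x)%Z /\ (2 %| q2 x)%Z /\ (2 %| q3 x)%Z) /\
  ((qnorm2 x %% 4)%Z = 3 ->
     (2 %| q1 x)%Z /\ ~~ (2 %| q0 x)%Z /\ ~~ (2 %| q2 x)%Z /\ ~~ (2 %| q3 x)%Z).

Definition mx2 (K : fieldType) (a b c d : K) : 'M[K]_2 :=
  \matrix_(i < 2, j < 2)
    if (i : nat) == 0%N then (if (j : nat) == 0%N then a else b)
    else (if (j : nat) == 0%N then c else d).

(** One component of psi, with parameters c, d (c^2 + d^2 + 1 = 0). *)
Definition psi_comp (K : fieldType) (c d : K) (x : quat) : 'M[K]_2 :=
  let x0 : K := (q0 x)%:~R in let x1 : K := (q1 x)%:~R in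
  let x2 : K := (q2 x)%:~R in let x3 : K := (q3 x)%:~R in
  mx2 (x0 + x1 * c + x3 * d) (- (x1 * d) + x2 + x3 * c)
      (- (x1 * d) - x2 + x3 * c) (x0 - x1 * c - x3 * d).

(** Representatives of elements of G = PGL_2(Kp) x PGL_2(Kl):
    pairs of (invertible) matrices, considered up to scalars. *)
Definition Grep (Kp Kl : fieldType) := ('M[Kp]_2 * 'M[Kl]_2)%type.

Definition Geq (Kp Kl : fieldType) (g h : Grep Kp Kl) : Prop :=
  exists (a : Kp) (b : Kl), a != 0 /\ b != 0 /\
    g.1 = a *: h.1 /\ g.2 = b *: h.2.

Definition Gmul (Kp Kl : fieldType) (g h : Grep Kp Kl) : Grep Kp Kl :=
  (g.1 *m h.1, g.2 *m h.2).

Definition Ginv (Kp Kl : fieldType) (g : Grep Kp Kl) : Grep Kp Kl :=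
  (invmx g.1, invmx g.2).

Definition Gone (Kp Kl : fieldType) : Grep Kp Kl := (1%:M, 1%:M).

Definition psi (Kp Kl : fieldType) (cp dp : Kp) (cl dl : Kl) (x : quat)
  : Grep Kp Kl := (psi_comp cp dp x, psi_comp cl dl x).

Definition in_Gamma (p l : nat) (Kp Kl : fieldType) (cp dp : Kp) (cl dl : Kl)
  (g : Grep Kp Kl) : Prop :=
  exists x : quat, in_GammaTilde p l x /\ Geq g (psi cp dp cl dl x).

Definition is_subgroup_in (Kp Kl : fieldType)
  (S H : Grep Kp Kl -> Prop) : Prop :=
  (forall g h, Geq g h -> H h -> H g) /\
  (forall g, H g -> S g) /\
  H (Gone Kp Kl) /\
  (forall g h, H g -> H h -> H (Gmul g h)) /\
  (forall g, H g -> H (Ginv g)).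

Definition is_abelian (Kp Kl : fieldType) (H : Grep Kp Kl -> Prop) : Prop :=
  forall g h, H g -> H h -> Geq (Gmul g h) (Gmul h g).

Definition max_abelian_subgroup (Kp Kl : fieldType)
  (S H : Grep Kp Kl -> Prop) : Prop :=
  is_subgroup_in S H /\ is_abelian H /\
  forall H', is_subgroup_in S H' -> is_abelian H' ->
    (forall g, H g -> H' g) -> forall g, H' g -> H g.

Definition malnormal_in (Kp Kl : fieldType)
  (S H : Grep Kp Kl -> Prop) : Prop :=
  forall g, S g -> ~ H g ->
    forall h, H h -> H (Gmul (Gmul g h) (Ginv g)) ->
      Geq (Gmul (Gmul g h) (Ginv g)) (Gone Kp Kl).

Definition is_CSA (Kp Kl : fieldType) (S : Grep Kp Kl -> Prop) : Prop :=
  forall H, max_abelian_subgroup S H -> malnormal_in S H.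

(* Main.v *)
Require Import Defs.
From mathcomp Require Import all_boot all_order all_algebra.
From mathcomp Require Import ring lra zify.
Import Order.TTheory GRing.Theory Num.Theory.
Set Implicit Arguments. Unset Strict Implicit.
Local Open Scope ring_scope.

Definition qmul (x y : quat) : quat :=
  Quat (q0 x * q0 y - q1 x * q1 y - q2 x * q2 y - q3 x * q3 y)
       (q0 x * q1 y + q1 x * q0 y + q2 x * q3 y - q3 x * q2 y)
       (q0 x * q2 y - q1 x * q3 y + q2 x * q0 y + q3 x * q1 y)
       (q0 x * q3 y + q1 x * q2 y - q2 x * q1 y + q3 x * q0 y).
Definition qconj (x : quat) : quat := Quat (q0 x) (- q1 x) (- q2 x) (- q3 x).
Definition qone : quat := Quat 1 0 0 0.
Definition cr1 (x y : quat) : int := q2 x * q3 y - q3 x * q2 y.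
Definition cr2 (x y : quat) : int := q3 x * q1 y - q1 x * q3 y.
Definition cr3 (x y : quat) : int := q1 x * q2 y - q2 x * q1 y.
Definition dotv (x y : quat) : int := q1 x * q1 y + q2 x * q2 y + q3 x * q3 y.
Definition par (x y : quat) : Prop := cr1 x y = 0 /\ cr2 x y = 0 /\ cr3 x y = 0.
Definition vz (x : quat) : Prop := q1 x = 0 /\ q2 x = 0 /\ q3 x = 0.

Lemma n2v_neq0 x : ~ vz x -> dotv x x != 0.
Proof.
case: x => x0 x1 x2 x3; rewrite /vz /dotv /= => h; apply/eqP => e; apply: h.
split; [nia|split; nia].
Qed.

Lemma par_scal x z : par x z ->
  [/\ dotv z z * q1 x = dotv x z * q1 z, dotv z z * q2 x = dotv x z * q2 z
    & dotv z z * q3 x = dotv x z * q3 z].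
Proof.
case: x => x0 x1 x2 x3; case: z => z0 z1 z2 z3.
rewrite /par /cr1 /cr2 /cr3 /dotv /= => -[h1 [h2 h3]].
split.
- have -> : (z1 * z1 + z2 * z2 + z3 * z3) * x1 = (x1 * z1 + x2 * z2 + x3 * z3) * z1
     + (z2 * (x1 * z2 - x2 * z1) - z3 * (x3 * z1 - x1 * z3)) by ring.
  by rewrite h2 h3; ring.
- have -> : (z1 * z1 + z2 * z2 + z3 * z3) * x2 = (x1 * z1 + x2 * z2 + x3 * z3) * z2
     + (z3 * (x2 * z3 - x3 * z2) - z1 * (x1 * z2 - x2 * z1)) by ring.
  by rewrite h1 h3; ring.
- have -> : (z1 * z1 + z2 * z2 + z3 * z3) * x3 = (x1 * z1 + x2 * z2 + x3 * z3) * z3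
     + (z1 * (x3 * z1 - x1 * z3) - z2 * (x2 * z3 - x3 * z2)) by ring.
  by rewrite h1 h2; ring.
Qed.

Lemma par_trans x y z : ~ vz z -> par x z -> par y z -> par x y.
Proof.
move=> nz hx hy; have n0 := n2v_neq0 nz.
have [a1 a2 a3] := par_scal hx; have [b1 b2 b3] := par_scal hy.
set N := dotv z z in n0 a1 a2 a3 b1 b2 b3.
have key : forall e : int, N * N * e = 0 -> e = 0.
  by move=> e /eqP; rewrite !mulf_eq0 (negbTE n0) /= => /eqP.
rewrite /par /cr1 /cr2 /cr3; split; [|split]; apply: key.
- have -> : N * N * (q2 x * q3 y - q3 x * q2 y) = (N * q2 x) * (N * q3 y) - (N * q3 x) * (N * q2 y) by ring.
  rewrite a2 a3 b2 b3; ring.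
- have -> : N * N * (q3 x * q1 y - q1 x * q3 y) = (N * q3 x) * (N * q1 y) - (N * q1 x) * (N * q3 y) by ring.
  rewrite a1 a3 b1 b3; ring.
- have -> : N * N * (q1 x * q2 y - q2 x * q1 y) = (N * q1 x) * (N * q2 y) - (N * q2 x) * (N * q1 y) by ring.
  rewrite a1 a2 b1 b2; ring.
Qed.

Lemma qmul_comm_par x y : par x y -> qmul x y = qmul y x.
Proof.
case: x => x0 x1 x2 x3; case: y => y0 y1 y2 y3.
rewrite /par /cr1 /cr2 /cr3 /qmul /= => -[h1 [h2 h3]].
congr Quat; lia.
Qed.

Lemma par_conj x z : par x z -> par (qconj x) z.
Proof.
case: x => x0 x1 x2 x3; rewrite /par /cr1 /cr2 /cr3 /qconj /= => -[h1 [h2 h3]].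
split; [lia|split; lia].
Qed.

Lemma par_one z : par qone z.
Proof. rewrite /par /cr1 /cr2 /cr3 /qone /=; split; [ring|split; ring]. Qed.

Lemma par_mul x y z : ~ vz z -> par x z -> par y z -> par (qmul x y) z.
Proof.
move=> nz hx hy; have [c1 [c2 c3]] := par_trans nz hx hy.
clear nz; move: hx hy c1 c2 c3; case: x => x0 x1 x2 x3; case: y => y0 y1 y2 y3; case: z => z0 z1 z2 z3.
rewrite /par /cr1 /cr2 /cr3 /qmul /= => -[h1 [h2 h3]] [k1 [k2 k3]] c1 c2 c3.
split; [|split].
- have -> : (x0 * y2 - x1 * y3 + x2 * y0 + x3 * y1) * z3 - (x0 * y3 + x1 * y2 - x2 * y1 + x3 * y0) * z2
    = x0 * (y2 * z3 - y3 * z2) + y0 * (x2 * z3 - x3 * z2) + (x3 * y1 - x1 * y3) * z3 - (x1 * y2 - x2 * y1) * z2 by ring.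
  by rewrite h1 k1 c2 c3; ring.
- have -> : (x0 * y3 + x1 * y2 - x2 * y1 + x3 * y0) * z1 - (x0 * y1 + x1 * y0 + x2 * y3 - x3 * y2) * z3
    = x0 * (y3 * z1 - y1 * z3) + y0 * (x3 * z1 - x1 * z3) + (x1 * y2 - x2 * y1) * z1 - (x2 * y3 - x3 * y2) * z3 by ring.
  by rewrite h2 k2 c1 c3; ring.
- have -> : (x0 * y1 + x1 * y0 + x2 * y3 - x3 * y2) * z2 - (x0 * y2 - x1 * y3 + x2 * y0 + x3 * y1) * z1
    = x0 * (y1 * z2 - y2 * z1) + y0 * (x1 * z2 - x2 * z1) + (x2 * y3 - x3 * y2) * z2 - (x3 * y1 - x1 * y3) * z1 by ring.
  by rewrite h3 k3 c1 c2; ring.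
Qed.

Lemma conj_core x z : q0 x != 0 -> ~ vz z ->
  par (qmul (qconj x) (qmul z x)) z -> par x z.
Proof.
move=> x0n nz; have nZ0 := n2v_neq0 nz.
move: x0n nz nZ0; case: x => x0 x1 x2 x3; case: z => z0 z1 z2 z3.
rewrite /par /cr1 /cr2 /cr3 /qmul /qconj /dotv /= => x0n nz nZ0 [e1 [e2 e3]].
set d := x1 * z1 + x2 * z2 + x3 * z3.
set nZ := z1 * z1 + z2 * z2 + z3 * z3 in nZ0.
set C1 := x2 * z3 - x3 * z2; set C2 := x3 * z1 - x1 * z3; set C3 := x1 * z2 - x2 * z1.
have E1 : 2 * d * C1 - 2 * x0 * (d * z1 - nZ * x1) = 0 by rewrite -e1 /d /C1 /nZ; ring.
have E2 : 2 * d * C2 - 2 * x0 * (d * z2 - nZ * x2) = 0 by rewrite -e2 /d /C2 /nZ; ring.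
have E3 : 2 * d * C3 - 2 * x0 * (d * z3 - nZ * x3) = 0 by rewrite -e3 /d /C3 /nZ; ring.
have hd : 2 * d * (C1 * C1 + C2 * C2 + C3 * C3) = 0.
  have -> : 2 * d * (C1 * C1 + C2 * C2 + C3 * C3) =
    (2 * d * C1 - 2 * x0 * (d * z1 - nZ * x1)) * C1 +
    (2 * d * C2 - 2 * x0 * (d * z2 - nZ * x2)) * C2 +
    (2 * d * C3 - 2 * x0 * (d * z3 - nZ * x3)) * C3 by rewrite /C1 /C2 /C3 /d /nZ; ring.
  by rewrite E1 E2 E3; ring.
move/eqP: hd; rewrite !mulf_eq0 /= => /orP[/eqP d0|/eqP nC].
- have key : forall t : int, 2 * x0 * nZ * t = 0 -> t = 0.
    by move=> t /eqP; rewrite !mulf_eq0 (negbTE x0n) (negbTE nZ0) /= => /eqP.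
  have X1 : x1 = 0 by apply: key; rewrite -E1 d0; ring.
  have X2 : x2 = 0 by apply: key; rewrite -E2 d0; ring.
  have X3 : x3 = 0 by apply: key; rewrite -E3 d0; ring.
  rewrite /C1 /C2 /C3 X1 X2 X3; split; [ring|split; ring].
- rewrite -/C1 -/C2 -/C3; split; [nia|split; nia].
Qed.
Definition TA (x : quat) : Prop :=
  ~~ (2 %| q0 x)%Z /\ (2 %| q1 x)%Z /\ (2 %| q2 x)%Z /\ (2 %| q3 x)%Z.
Definition TB (x : quat) : Prop :=
  (2 %| q1 x)%Z /\ ~~ (2 %| q0 x)%Z /\ ~~ (2 %| q2 x)%Z /\ ~~ (2 %| q3 x)%Z.
Definition good x := TA x \/ TB x.

Lemma oddW (a : int) : ~~ (2 %| a)%Z -> exists k, a = 2 * k + 1.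
Proof. by move=> h; exists (a %/ 2)%Z; lia. Qed.
Lemma evenW (a : int) : (2 %| a)%Z -> exists k, a = 2 * k.
Proof. by move=> h; exists (a %/ 2)%Z; lia. Qed.

Lemma good_cond x : good x ->
  ((qnorm2 x %% 4)%Z = 1 ->
     ~~ (2 %| q0 x)%Z /\ (2 %| q1 x)%Z /\ (2 %| q2 x)%Z /\ (2 %| q3 x)%Z) /\
  ((qnorm2 x %% 4)%Z = 3 ->
     (2 %| q1 x)%Z /\ ~~ (2 %| q0 x)%Z /\ ~~ (2 %| q2 x)%Z /\ ~~ (2 %| q3 x)%Z).
Proof.
case: x => x0 x1 x2 x3; rewrite /good /TA /TB /qnorm2 /=.
case=> [[/oddW[a ->] [/evenW[b ->] [/evenW[c ->] /evenW[e ->]]]]|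
        [/evenW[b ->] [/oddW[a ->] [/oddW[c ->] /oddW[e ->]]]]].
- split=> h; first by split; [lia|split; [lia|split; lia]].
  exfalso; move: h; lia.
- split=> h; last by split; [lia|split; [lia|split; lia]].
  exfalso; move: h; lia.
Qed.

Lemma q0_neq0 x : good x -> q0 x != 0.
Proof. by case=> [[h _]|[_ [h _]]]; apply/eqP => e; move: h; rewrite e. Qed.

Lemma good_conj x : good x -> good (qconj x).
Proof.
case: x => x0 x1 x2 x3; rewrite /good /TA /TB /qconj /=.
case=> [[h0 [h1 [h2 h3]]]|[h1 [h0 [h2 h3]]]]; [left|right];
  split; try split; try split; lia.
Qed.

Lemma good_mul x y : good x -> good y -> good (qmul x y).
Proof.
case: x => x0 x1 x2 x3; case: y => y0 y1 y2 y3; rewrite /good /TA /TB /qmul /=.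
case=> [[/oddW[a0 ->] [/evenW[a1 ->] [/evenW[a2 ->] /evenW[a3 ->]]]]|
        [/evenW[a1 ->] [/oddW[a0 ->] [/oddW[a2 ->] /oddW[a3 ->]]]]];
case=> [[/oddW[b0 ->] [/evenW[b1 ->] [/evenW[b2 ->] /evenW[b3 ->]]]]|
        [/evenW[b1 ->] [/oddW[b0 ->] [/oddW[b2 ->] /oddW[b3 ->]]]]].
- left; split; [lia|split; [lia|split; lia]].
- right; split; [lia|split; [lia|split; lia]].
- right; split; [lia|split; [lia|split; lia]].
- left; split; [lia|split; [lia|split; lia]].
Qed.

Lemma qnorm2_mul x y : qnorm2 (qmul x y) = qnorm2 x * qnorm2 y.
Proof. rewrite /qnorm2 /qmul /=; ring. Qed.
Lemma qnorm2_conj x : qnorm2 (qconj x) = qnorm2 x.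
Proof. rewrite /qnorm2 /qconj /=; ring. Qed.

Section GT.
Variables (p l : nat).
Hypotheses (pp : prime p) (pl : prime l) (op : odd p) (ol : odd l).

Lemma gt_good x : in_GammaTilde p l x -> good x.
Proof.
case=> [[r [s e]] [c1 c3]].
have : odd (p ^ r * l ^ s) by rewrite oddM !oddX op ol !orbT.
move=> od.
have : ((qnorm2 x) %% 4)%Z = 1 \/ ((qnorm2 x) %% 4)%Z = 3 by rewrite e; lia.
by case=> h; [left; apply: c1|right; apply: c3].
Qed.

Lemma gt_norm_pos x : in_GammaTilde p l x -> qnorm2 x != 0.
Proof.
case=> [[r [s ->]] _]; rewrite eqz_nat -lt0n muln_gt0 !expn_gt0.
by rewrite (prime_gt0 pp) (prime_gt0 pl).
Qed.

Lemma gt_of x : (exists r s : nat, qnorm2 x = (p ^ r * l ^ s)%N%:Z) -> good x ->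
  in_GammaTilde p l x.
Proof. by move=> h g; split => //; apply: good_cond. Qed.

Lemma gt_mul x y : in_GammaTilde p l x -> in_GammaTilde p l y ->
  in_GammaTilde p l (qmul x y).
Proof.
move=> hx hy; apply: gt_of; last by apply: good_mul; apply: gt_good.
case: hx => [[r1 [s1 e1]] _]; case: hy => [[r2 [s2 e2]] _].
exists (r1 + r2)%N, (s1 + s2)%N; rewrite qnorm2_mul e1 e2 -PoszM.
by congr Posz; rewrite !expnD mulnACA.
Qed.

Lemma gt_conj x : in_GammaTilde p l x -> in_GammaTilde p l (qconj x).
Proof.
move=> hx; apply: gt_of; last by apply: good_conj; apply: gt_good.
by case: hx => [[r [s e]] _]; exists r, s; rewrite qnorm2_conj.
Qed.

Lemma gt_one : in_GammaTilde p l qone.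
Proof.
apply: gt_of; last by left; rewrite /TA /qone /=; split; [|split; [|split]].
by exists 0%N, 0%N.
Qed.
End GT.
Lemma sq0 (a b c : int) : a * a + b * b + c * c = 0 -> [/\ a = 0, b = 0 & c = 0].
Proof. move=> h; split; nia. Qed.

Section KLemmas.
Variable K : fieldType.
Hypothesis hc : [pchar K] =i pred0.
Variables c d : K.
Hypothesis H : c ^+ 2 + d ^+ 2 + 1 = 0.

Local Notation ir := (fun n : int => (n%:~R : K)).

Lemma intK0 (n : int) : (n%:~R : K) = 0 -> n = 0.
Proof.
have hn := (pcharf0P K).1 hc.
case: n => m.
- by move/eqP; rewrite -[_%:~R]/(m%:R) hn => /eqP ->.
- rewrite NegzE intrN => /eqP; rewrite oppr_eq0 -[_%:~R]/(m.+1%:R) hn //.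
Qed.

Lemma intK_neq0 (n : int) : n != 0 -> (n%:~R : K) != 0.
Proof. by move=> h; apply/eqP => /intK0 e; rewrite e eqxx in h. Qed.

Lemma two_neq0 : (2 : K) != 0.
Proof. by have := (pcharf0P K).1 hc 2%N; rewrite -[2%:R]/(2 : K) => ->. Qed.

Lemma eq_modH (a b q : K) : b - a = (c ^+ 2 + d ^+ 2 + 1) * q -> a = b.
Proof. by rewrite H mul0r => /eqP; rewrite subr_eq0 => /eqP ->. Qed.

Lemma psi_mul x y : psi_comp c d (qmul x y) = psi_comp c d x *m psi_comp c d y.
Proof.
apply/matrixP => i j; rewrite !mxE !big_ord_recr big_ord0 /= !mxE.
case: x => x0 x1 x2 x3; case: y => y0 y1 y2 y3.
rewrite /qmul /= !(intrD, intrB, intrM, intrN).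
case: i => [[|[|i]] hi] //; case: j => [[|[|j]] hj] //=.
- apply: (eq_modH (q := x1%:~R * y1%:~R + x3%:~R * y3%:~R)); ring.
- apply: (eq_modH (q := x1%:~R * y3%:~R - x3%:~R * y1%:~R)); ring.
- apply: (eq_modH (q := x3%:~R * y1%:~R - x1%:~R * y3%:~R)); ring.
- apply: (eq_modH (q := x1%:~R * y1%:~R + x3%:~R * y3%:~R)); ring.
Qed.

Lemma psi_scal (n : int) : psi_comp c d (Quat n 0 0 0) = n%:~R *: 1%:M.
Proof.
apply/matrixP => i j; rewrite !mxE.
case: i => [[|[|i]] hi] //; case: j => [[|[|j]] hj] //=; ring.
Qed.

Lemma psi_one : psi_comp c d qone = 1%:M.
Proof. by rewrite /qone psi_scal scale1r. Qed.

Lemma qmul_conj x : qmul x (qconj x) = Quat (qnorm2 x) 0 0 0.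
Proof. rewrite /qmul /qconj /qnorm2 /=; congr Quat; ring. Qed.

Lemma psi_inv x : qnorm2 x != 0 ->
  psi_comp c d x \in unitmx /\
  invmx (psi_comp c d x) = (qnorm2 x)%:~R^-1 *: psi_comp c d (qconj x).
Proof.
move=> n0; have n0' := intK_neq0 n0.
have e : psi_comp c d x *m ((qnorm2 x)%:~R^-1 *: psi_comp c d (qconj x)) = 1%:M.
  by rewrite -scalemxAr -psi_mul qmul_conj psi_scal scalerA mulVf // scale1r.
have [u _] := mulmx1_unit e; split => //.
by rewrite -[LHS]mulmx1 -e mulmxA mulVmx // mul1mx.
Qed.

Lemma lin_extract (U0 U1 U2 U3 W0 W1 W2 W3 a : K) :
  U0 + U1 * c + U3 * d = a * (W0 + W1 * c + W3 * d) ->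
  - (U1 * d) + U2 + U3 * c = a * (- (W1 * d) + W2 + W3 * c) ->
  - (U1 * d) - U2 + U3 * c = a * (- (W1 * d) - W2 + W3 * c) ->
  U0 - U1 * c - U3 * d = a * (W0 - W1 * c - W3 * d) ->
  [/\ U0 = a * W0, U1 = a * W1, U2 = a * W2 & U3 = a * W3].
Proof.
move=> e00 e01 e10 e11.
have t0 := two_neq0.
have zb : forall t s : K, 2 * t = s -> s = 0 -> t = 0.
  by move=> t s <- /eqP; rewrite mulf_eq0 (negbTE t0) => /eqP.
have fin : forall u v : K, u - v = 0 -> u = v by move=> u v /eqP; rewrite subr_eq0 => /eqP.
set D00 := U0 + U1 * c + U3 * d - a * (W0 + W1 * c + W3 * d).
set D01 := - (U1 * d) + U2 + U3 * c - a * (- (W1 * d) + W2 + W3 * c).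
set D10 := - (U1 * d) - U2 + U3 * c - a * (- (W1 * d) - W2 + W3 * c).
set D11 := U0 - U1 * c - U3 * d - a * (W0 - W1 * c - W3 * d).
have z00 : D00 = 0 by rewrite /D00 e00 subrr.
have z01 : D01 = 0 by rewrite /D01 e01 subrr.
have z10 : D10 = 0 by rewrite /D10 e10 subrr.
have z11 : D11 = 0 by rewrite /D11 e11 subrr.
split; apply: fin.
- apply: (zb _ (D00 + D11)); first by rewrite /D00 /D11; ring.
  by rewrite z00 z11 addr0.
- apply: (zb _ (- (c * (D00 - D11) - d * (D01 + D10)) + 2 * (U1 - a * W1) * (c ^+ 2 + d ^+ 2 + 1))).
    by rewrite /D00 /D11 /D01 /D10; ring.
  by rewrite z00 z11 z01 z10 H; ring.
- apply: (zb _ (D01 - D10)); first by rewrite /D01 /D10; ring.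
  by rewrite z01 z10 subr0.
- apply: (zb _ (- (d * (D00 - D11) + c * (D01 + D10)) + 2 * (U3 - a * W3) * (c ^+ 2 + d ^+ 2 + 1))).
    by rewrite /D00 /D11 /D01 /D10; ring.
  by rewrite z00 z11 z01 z10 H; ring.
Qed.

Lemma L0 (u w : quat) (a : K) : psi_comp c d u = a *: psi_comp c d w ->
  [/\ ir (q0 u) = a * ir (q0 w), ir (q1 u) = a * ir (q1 w),
      ir (q2 u) = a * ir (q2 w) & ir (q3 u) = a * ir (q3 w)].
Proof.
move=> e.
have e00 := congr1 (fun M : 'M[K]_2 => M ord0 ord0) e.
have e01 := congr1 (fun M : 'M[K]_2 => M ord0 ord_max) e.
have e10 := congr1 (fun M : 'M[K]_2 => M ord_max ord0) e.
have e11 := congr1 (fun M : 'M[K]_2 => M ord_max ord_max) e.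
rewrite /= !mxE /= in e00 e01 e10 e11.
exact: lin_extract e00 e01 e10 e11.
Qed.

Lemma dot_trick (b : K) (u0 u1 u2 u3 v0 v1 v2 v3 r0 r1 r2 r3 n m : int) :
  ir u0 = b * ir v0 -> ir u1 = b * ir v1 -> ir u2 = b * ir v2 -> ir u3 = b * ir v3 ->
  u0 * r0 + u1 * r1 + u2 * r2 + u3 * r3 = n ->
  v0 * r0 + v1 * r1 + v2 * r2 + v3 * r3 = m -> ir n = b * ir m.
Proof.
move=> /= e0 e1 e2 e3 <- <-; rewrite !intrD !intrM e0 e1 e2 e3; ring.
Qed.

End KLemmas.
Section KLemmas2.
Variable K : fieldType.
Hypothesis hc : [pchar K] =i pred0.
Variables c d : K.
Hypothesis H : c ^+ 2 + d ^+ 2 + 1 = 0.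

Lemma comm_par (z w : quat) (b : K) : q0 z != 0 ->
  psi_comp c d (qmul z w) = b *: psi_comp c d (qmul w z) -> par z w.
Proof.
move=> z0n e; have [e0 e1 e2 e3] := L0 hc H e.
set Q1 := cr1 z w; set Q2 := cr2 z w; set Q3 := cr3 z w.
set P1 := q0 z * q1 w + q0 w * q1 z; set P2 := q0 z * q2 w + q0 w * q2 z.
set P3 := q0 z * q3 w + q0 w * q3 z.
have hQ := dot_trick (r0 := 0) (r1 := Q1) (r2 := Q2) (r3 := Q3)
  (n := Q1 * Q1 + Q2 * Q2 + Q3 * Q3) (m := - (Q1 * Q1 + Q2 * Q2 + Q3 * Q3)) e0 e1 e2 e3.
have hP := dot_trick (r0 := 0) (r1 := P1) (r2 := P2) (r3 := P3)
  (n := P1 * P1 + P2 * P2 + P3 * P3) (m := P1 * P1 + P2 * P2 + P3 * P3) e0 e1 e2 e3.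
have {hQ}hQ := hQ (ltac:(rewrite /Q1 /Q2 /Q3 /cr1 /cr2 /cr3 /qmul /=; ring))
                 (ltac:(rewrite /Q1 /Q2 /Q3 /cr1 /cr2 /cr3 /qmul /=; ring)).
have {hP}hP := hP (ltac:(rewrite /P1 /P2 /P3 /qmul /=; ring))
                 (ltac:(rewrite /P1 /P2 /P3 /qmul /=; ring)).
have [/eqP nQ0|nQ0] := boolP (Q1 * Q1 + Q2 * Q2 + Q3 * Q3 == 0).
  by have [h1 h2 h3] := sq0 nQ0; split; [|split].
exfalso.
have nK := intK_neq0 hc nQ0.
rewrite intrN in hQ.
have b1 : b = -1.
  apply/eqP; rewrite -subr_eq0 opprK; apply/eqP.
  have : (1 + b) * (Q1 * Q1 + Q2 * Q2 + Q3 * Q3)%:~R = 0 :> K by rewrite mulrDl mul1r {1}hQ; ring.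
  by move/eqP; rewrite mulf_eq0 (negbTE nK) orbF addrC => /eqP.
rewrite b1 in hP.
have : (P1 * P1 + P2 * P2 + P3 * P3) = 0.
  apply: (intK0 hc).
  suff: (2 : K) * (P1 * P1 + P2 * P2 + P3 * P3)%:~R = 0.
    by move/eqP; rewrite mulf_eq0 (negbTE (two_neq0 hc)) => /eqP.
  move/eqP: hP; rewrite -subr_eq0 => /eqP hP; rewrite -hP; ring.
move=> /sq0 [p1 p2 p3].
have k : forall t : int, q0 z * t = 0 -> t = 0.
  by move=> t /eqP; rewrite mulf_eq0 (negbTE z0n) => /eqP.
have hq1 : Q1 = 0 by apply: k; rewrite -[RHS](_ : q2 z * P3 - q3 z * P2 = 0);
  [rewrite /Q1 /P2 /P3 /cr1; ring | rewrite p2 p3; ring].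
have hq2 : Q2 = 0 by apply: k; rewrite -[RHS](_ : q3 z * P1 - q1 z * P3 = 0);
  [rewrite /Q2 /P1 /P3 /cr2; ring | rewrite p1 p3; ring].
have hq3 : Q3 = 0 by apply: k; rewrite -[RHS](_ : q1 z * P2 - q2 z * P1 = 0);
  [rewrite /Q3 /P1 /P2 /cr3; ring | rewrite p1 p2; ring].
by move: nQ0; rewrite hq1 hq2 hq3 !mulr0 !addr0 eqxx.
Qed.

Lemma conj_par (x y z : quat) (a : K) : q0 x != 0 -> a != 0 -> ~ vz z -> par y z ->
  psi_comp c d (qmul x y) = a *: psi_comp c d (qmul z x) -> par x z.
Proof.
move=> x0n an nz [h1 [h2 h3]] e; have [e0 e1 e2 e3] := L0 hc H e.
apply: conj_core => //.
set N := qnorm2 x; set R := qmul (qconj x) (qmul z x).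
have f1 := dot_trick (r0 := - q1 x) (r1 := q0 x) (r2 := q3 x) (r3 := - q2 x)
  (n := N * q1 y) (m := q1 R) e0 e1 e2 e3
  (ltac:(rewrite /N /qnorm2 /qmul /=; ring)) (ltac:(rewrite /R /qmul /qconj /=; ring)).
have f2 := dot_trick (r0 := - q2 x) (r1 := - q3 x) (r2 := q0 x) (r3 := q1 x)
  (n := N * q2 y) (m := q2 R) e0 e1 e2 e3
  (ltac:(rewrite /N /qnorm2 /qmul /=; ring)) (ltac:(rewrite /R /qmul /qconj /=; ring)).
have f3 := dot_trick (r0 := - q3 x) (r1 := q2 x) (r2 := - q1 x) (r3 := q0 x)
  (n := N * q3 y) (m := q3 R) e0 e1 e2 e3
  (ltac:(rewrite /N /qnorm2 /qmul /=; ring)) (ltac:(rewrite /R /qmul /qconj /=; ring)).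
have f0 : (0 : int)%:~R = a * (0 : int)%:~R :> K by rewrite mulr0.
have fin : forall t : int, (0 : int)%:~R = a * t%:~R :> K -> t = 0.
  move=> t /esym/eqP; rewrite mulf_eq0 (negbTE an) /= => /eqP; exact: intK0.
split; [|split]; apply: fin.
- apply: (dot_trick (r0 := 0) (r1 := 0) (r2 := q3 z) (r3 := - q2 z) f0 f1 f2 f3).
    by transitivity (N * cr1 y z); [rewrite /cr1; ring | rewrite h1 mulr0].
  by rewrite /cr1; ring.
- apply: (dot_trick (r0 := 0) (r1 := - q3 z) (r2 := 0) (r3 := q1 z) f0 f1 f2 f3).
    by transitivity (N * cr2 y z); [rewrite /cr2; ring | rewrite h2 mulr0].
  by rewrite /cr2; ring.
- apply: (dot_trick (r0 := 0) (r1 := q2 z) (r2 := - q1 z) (r3 := 0) f0 f1 f2 f3).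
    by transitivity (N * cr3 y z); [rewrite /cr3; ring | rewrite h3 mulr0].
  by rewrite /cr3; ring.
Qed.

End KLemmas2.
Section GeqLemmas.
Variables Kp Kl : fieldType.

Lemma Geq_refl (g : Grep Kp Kl) : Geq g g.
Proof. by exists 1, 1; rewrite !oner_eq0 !scale1r; case: g. Qed.

Lemma Geq_sym (g h : Grep Kp Kl) : Geq g h -> Geq h g.
Proof.
case=> a [b [a0 [b0 [e1 e2]]]]; exists a^-1, b^-1.
by rewrite !invr_eq0 a0 b0 e1 e2 !scalerA !mulVf // !scale1r.
Qed.

Lemma Geq_trans (g h k : Grep Kp Kl) : Geq g h -> Geq h k -> Geq g k.
Proof.
case=> a [b [a0 [b0 [e1 e2]]]] [a' [b' [a0' [b0' [e1' e2']]]]].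
exists (a * a'), (b * b'); rewrite !mulf_neq0 //.
by rewrite e1 e2 e1' e2' !scalerA.
Qed.

Lemma scale_mul_mx (K : fieldType) (a b : K) (A B : 'M[K]_2) :
  (a *: A) *m (b *: B) = (a * b) *: (A *m B).
Proof. by rewrite -scalemxAl -scalemxAr scalerA. Qed.

Lemma Geq_mul (g g' h h' : Grep Kp Kl) : Geq g g' -> Geq h h' ->
  Geq (Gmul g h) (Gmul g' h').
Proof.
case=> a [b [a0 [b0 [e1 e2]]]] [a' [b' [a0' [b0' [e1' e2']]]]].
exists (a * a'), (b * b'); rewrite !mulf_neq0 //.
by rewrite /Gmul /= e1 e2 e1' e2' !scale_mul_mx.
Qed.

Lemma scale_cancel (K : fieldType) (s b : K) (A B : 'M[K]_2) : s != 0 ->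
  s *: A = (b * s) *: B -> A = b *: B.
Proof.
move=> s0 e; have := congr1 (fun M => s^-1 *: M) e.
by rewrite /= !scalerA mulVf // scale1r mulrCA mulVf // mulr1.
Qed.

Variables (cp dp : Kp) (cl dl : Kl).
Hypotheses (hcp : [pchar Kp] =i pred0) (hcl : [pchar Kl] =i pred0).
Hypotheses (Hp : cp ^+ 2 + dp ^+ 2 + 1 = 0) (Hl : cl ^+ 2 + dl ^+ 2 + 1 = 0).

Lemma Gmul_psi x y : Gmul (psi cp dp cl dl x) (psi cp dp cl dl y) = psi cp dp cl dl (qmul x y).
Proof. by rewrite /Gmul /psi /= (psi_mul Hp) (psi_mul Hl). Qed.

Lemma Geq_inv_psi (g : Grep Kp Kl) x : qnorm2 x != 0 ->
  Geq g (psi cp dp cl dl x) -> Geq (Ginv g) (psi cp dp cl dl (qconj x)).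
Proof.
move=> n0 [a [b [a0 [b0 [e1 e2]]]]].
have [u1 i1] := psi_inv hcp Hp n0; have [u2 i2] := psi_inv hcl Hl n0.
exists (a^-1 * (qnorm2 x)%:~R^-1), (b^-1 * (qnorm2 x)%:~R^-1).
rewrite !mulf_neq0 ?invr_eq0 ?intK_neq0 //.
rewrite /Ginv /psi /= e1 e2 !invmxZ ?unitmxZ ?unitfE // i1 i2 !scalerA //.
Qed.

Lemma Geq_unit1 (g : Grep Kp Kl) x : qnorm2 x != 0 ->
  Geq g (psi cp dp cl dl x) -> g.1 \in unitmx.
Proof.
move=> n0 [a [b [a0 [b0 [e1 e2]]]]].
have [u1 _] := psi_inv hcp Hp n0.
by rewrite e1 unitmxZ ?unitfE.
Qed.

Lemma comm_from_geq (w w' : quat) (f f' : Grep Kp Kl) : q0 w != 0 ->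
  Geq f (psi cp dp cl dl w) -> Geq f' (psi cp dp cl dl w') ->
  Geq (Gmul f f') (Gmul f' f) -> par w w'.
Proof.
move=> w0 [a [_ [a0 [_ [e1 _]]]]] [a' [_ [a0' [_ [e1' _]]]]] [b [_ [b0 [_ [e _]]]]].
move: e; rewrite /Gmul /= e1 e1' !scale_mul_mx -!(psi_mul Hp).
move=> e; rewrite scalerA (mulrC a') in e.
have e' := scale_cancel (mulf_neq0 a0 a0') e.
exact: (comm_par hcp Hp w0 e').
Qed.

End GeqLemmas.
Section ConjFrom.
Variables (Kp Kl : fieldType) (cp dp : Kp) (cl dl : Kl).
Hypotheses (hcp : [pchar Kp] =i pred0) (Hp : cp ^+ 2 + dp ^+ 2 + 1 = 0).

Lemma conj_from (g h : Grep Kp Kl) x y z : qnorm2 x != 0 -> q0 x != 0 -> ~ vz z ->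
  par y z -> Geq g (psi cp dp cl dl x) -> Geq h (psi cp dp cl dl y) ->
  Geq (Gmul (Gmul g h) (Ginv g)) (psi cp dp cl dl z) -> par x z.
Proof.
move=> n0 x0 nz pyz ex.
have u := Geq_unit1 hcp Hp n0 ex.
move: ex => [al [_ [al0 [_ [e1 _]]]]] [et [_ [et0 [_ [e2 _]]]]] [ga [_ [ga0 [_ [e3 _]]]]].
move: e3; rewrite /Gmul /Ginv /= => e3.
have e4 : (g.1 *m h.1 *m invmx g.1) *m g.1 = g.1 *m h.1 by rewrite mulmxKV.
rewrite e3 {1}e1 e2 e1 /= !scale_mul_mx -!(psi_mul Hp) in e4.
have e5 : (al * et) *: psi_comp cp dp (qmul x y) =
   ((ga * et^-1) * (al * et)) *: psi_comp cp dp (qmul z x).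
  rewrite -e4; congr (_ *: _).
  have -> : ga * et^-1 * (al * et) = ga * al * (et^-1 * et) by ring.
  by rewrite mulVf // mulr1.
have e6 := scale_cancel (mulf_neq0 al0 et0) e5.
apply: (conj_par hcp Hp x0 _ nz pyz e6).
by rewrite mulf_neq0 ?invr_eq0.
Qed.
End ConjFrom.

Unset Implicit Arguments.
Set Strict Implicit.

Theorem proposition2p6 (p l : nat) (Kp Kl : fieldType)
  (cp dp : Kp) (cl dl : Kl) :
  prime p -> prime l -> odd p -> odd l -> p != l ->
  [pchar Kp] =i pred0 -> [pchar Kl] =i pred0 ->
  cp ^+ 2 + dp ^+ 2 + 1 = 0 -> cl ^+ 2 + dl ^+ 2 + 1 = 0 ->
  is_CSA (in_Gamma p l cp dp cl dl).
Proof.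
move=> pp pl op ol _ hcp hcl Hp Hl HH [[Hcl [Hsub [H1 [Hm Hi]]]] [Hab Hmax]] g Sg nHg h Hh Hk.
set k := Gmul (Gmul g h) (Ginv g) in Hk *.
have [z [gz ez]] := Hsub _ Hk.
have gd : forall x, in_GammaTilde p l x -> q0 x != 0.
  by move=> x gx; apply: q0_neq0; apply: (gt_good pp pl op ol).
have [vzz|nvz] := boolP ((q1 z == 0) && (q2 z == 0) && (q3 z == 0)).
  apply: (Geq_trans ez).
  move: vzz (gd _ gz); case: z {ez gz} => z0 z1 z2 z3 /= /andP[/andP[/eqP -> /eqP ->] /eqP ->] z0n.
  exists z0%:~R, z0%:~R; rewrite !intK_neq0 //.
  by rewrite /psi /Gone /= !psi_scal.
have nz : ~ vz z.
  by move=> [a [b c]]; move: nvz; rewrite a b c eqxx.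
pose H' := fun f => exists x, in_GammaTilde p l x /\ Geq f (psi cp dp cl dl x) /\ par x z.
have HH' : forall f, HH f -> H' f.
  move=> f Hf; have [w [gw ew]] := Hsub _ Hf; exists w; split => //; split => //.
  exact: (comm_from_geq hcp Hp (gd _ gw) ew ez (Hab _ _ Hf Hk)).
have sub' : is_subgroup_in (in_Gamma p l cp dp cl dl) H'.
  split; [|split; [|split; [|split]]].
  - move=> f1 f2 e [x [gx [ex px]]]; exists x; split => //; split => //.
    exact: Geq_trans e ex.
  - by move=> f [x [gx [ex _]]]; exists x; split.
  - exists qone; split; first exact: gt_one.
    split; last exact: par_one.
    rewrite /psi !psi_one; exact: Geq_refl.
  - move=> f1 f2 [x [gx [ex px]]] [y [gy [ey py]]]; exists (qmul x y).
    split; first exact: (gt_mul pp pl op ol).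
    split; last exact: par_mul.
    rewrite -(Gmul_psi Hp Hl); exact: Geq_mul.
  - move=> f [x [gx [ex px]]]; exists (qconj x).
    split; first exact: (gt_conj pp pl op ol).
    split; last exact: par_conj.
    exact: (Geq_inv_psi hcp hcl Hp Hl (gt_norm_pos pp pl gx) ex).
have ab' : is_abelian H'.
  move=> f1 f2 [x [gx [ex px]]] [y [gy [ey py]]].
  have e := qmul_comm_par (par_trans nz px py).
  apply: (Geq_trans (Geq_mul ex ey)).
  rewrite (Gmul_psi Hp Hl) e -(Gmul_psi Hp Hl).
  apply: Geq_sym; exact: Geq_mul.
exfalso; apply: nHg; apply: (Hmax H' sub' ab' HH').
have [x [gx ex]] := Sg.
have [y [gy [ey py]]] := HH' _ Hh.
exists x; split => //; split => //.
exact: (conj_from hcp Hp (gt_norm_pos pp pl gx) (gd _ gx) nz py ex ey ez).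
Qed.
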